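(* Let $A$ be a finitely generated free abelian group of rank $r$ and $M$ a finitely generated $\mathbb{Z}A$-module. Assume that for each subgroup $B\subset A$ with $\mathrm{rank}(B)<r$ there exist a positive integer $k$ and elements $a_1,\dots,a_k\in A\setminus B$ such that the product $(e_{a_1}-1)\cdots(e_{a_k}-1)$ annihilates $M$. Then $M$ is finitely generated as an abelian group.
   Context: $A$ is written additively; for $a\in A$, $e_a$ denotes the corresponding basis element of the group ring $\mathbb{Z}A$ (so $e_ae_b=e_{a+b}$ and $\mathbb{Z}A$ is a Laurent polynomial ring in $r$ variables). *)

(* Defs.v *)
From mathcomp Require Import all_boot all_order all_algebra.
Set Implicit Arguments. Unset Strict Implicit. Unset Printing Implicit Defensive.
Import Order.TTheory GRing.Theory Num.Theory.
Local Open Scope ring_scope.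

(* A ZA-module is an abelian group M together with an
   action of A by additive maps (e_a acts as act a, extended Z-linearly). *)
Notation grp r := 'rV[int]_r.

Definition is_ZA_action (r : nat) (M : zmodType) (act : grp r -> M -> M) : Prop :=
  [/\ forall a (x y : M), act a (x + y) = act a x + act a y,
      forall x : M, act 0 x = x &
      forall a b (x : M), act (a + b) x = act a (act b x)].

Definition fg_ZA_module (r : nat) (M : zmodType) (act : grp r -> M -> M) : Prop :=
  exists gens : seq M, forall m : M,
    exists s : seq (int * grp r * M),
      all (fun t => t.2 \in gens) s /\
      m = \sum_(t <- s) (act t.1.2 t.2) *~ t.1.1.

Definition fg_abelian (M : zmodType) : Prop :=
  exists n (g : 'I_n -> M), forall m : M,
    exists c : 'I_n -> int, m = \sum_(i < n) g i *~ c i.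

Definition is_subgroup (r : nat) (B : pred (grp r)) : Prop :=
  0 \in B /\ forall a b, a \in B -> b \in B -> a - b \in B.

(* rank(B) < k: every finite family of elements of B has fewer than k
   linearly independent members (rank = maximal number of linearly
   independent elements, computed over Q). *)
Definition subgroup_rank_lt (r : nat) (B : pred (grp r)) (k : nat) : Prop :=
  forall (n : nat) (v : 'M[int]_(n, r)),
    (forall i, row i v \in B) ->
    (\rank (map_mx (fun z : int => z%:~R : rat) v) < k)%N.

Definition prod_act (r : nat) (M : zmodType) (act : grp r -> M -> M)
    (as_ : seq (grp r)) (x : M) : M :=
  foldr (fun a y => act a y - y) x as_.

(* Main.v *)
Require Import Defs.
From mathcomp Require Import all_boot all_order all_algebra.
Import Order.TTheory GRing.Theory Num.Theory.
Set Implicit Arguments. Unset Strict Implicit. Unset Printing Implicit Defensive.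
Local Open Scope ring_scope.

Local Notation toQ := (map_mx (fun z : int => z%:~R : rat)).

Section Main.
Variables (r : nat) (M : zmodType) (act : 'rV[int]_r -> M -> M).
Hypothesis Hact : is_ZA_action act.

Lemma actD a x y : act a (x + y) = act a x + act a y.
Proof. by case: Hact. Qed.
Lemma act0 x : act 0 x = x.
Proof. by case: Hact. Qed.
Lemma actM a b x : act (a + b) x = act a (act b x).
Proof. by case: Hact. Qed.
Lemma actx0 a : act a 0 = 0.
Proof. by apply: (@addrI _ (act a 0)); rewrite -actD !addr0. Qed.
Lemma actN a x : act a (- x) = - act a x.
Proof. by apply/eqP; rewrite -subr_eq0 opprK -actD addNr actx0. Qed.
Lemma actB a x y : act a (x - y) = act a x - act a y.
Proof. by rewrite actD actN. Qed.
Lemma actC a b x : act a (act b x) = act b (act a x).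
Proof. by rewrite -!actM addrC. Qed.

Definition submod (Q : M -> Prop) :=
  [/\ Q 0, (forall x y, Q x -> Q y -> Q (x + y)),
      (forall x, Q x -> Q (- x)) & (forall a x, Q x -> Q (act a x))].

Inductive Gen (Q : M -> Prop) (G : seq M) : M -> Prop :=
| GQ x : Q x -> Gen Q G x
| GG x : x \in G -> Gen Q G x
| G0 : Gen Q G 0
| GD x y : Gen Q G x -> Gen Q G y -> Gen Q G (x + y)
| GN x : Gen Q G x -> Gen Q G (- x)
| GA a x : Gen Q G x -> Gen Q G (act a x).

Lemma Gen_submod Q G : submod (Gen Q G).
Proof. split; [exact: G0 | exact: GD | exact: GN | exact: GA]. Qed.

Lemma Gen_sub Q G (R : M -> Prop) : submod R -> (forall x, Q x -> R x) ->
  (forall x, x \in G -> R x) -> forall x, Gen Q G x -> R x.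
Proof.
case=> R0 RD RN RA HQ HG x; elim=> //; by auto.
Qed.

Lemma submodB (Q : M -> Prop) x y : submod Q -> Q x -> Q y -> Q (x - y).
Proof. by case=> _ QD QN _ qx qy; apply: QD => //; apply: QN. Qed.

Lemma submodMz (Q : M -> Prop) x n : submod Q -> Q x -> Q (x *~ n).
Proof.
case=> Q0 QD QN _ qx.
have H k : Q (x *+ k) by elim: k => [|k IH]; rewrite ?mulr0n // mulrS; apply: QD.
case: n => n; first exact: H.
by rewrite NegzE mulrNz; apply: QN; apply: H.
Qed.

Inductive ZS (hs : seq M) (Q : M -> Prop) : M -> Prop :=
| ZQ x : Q x -> ZS hs Q x
| Zh x : x \in hs -> ZS hs Q x
| Z0 : ZS hs Q 0
| ZD x y : ZS hs Q x -> ZS hs Q y -> ZS hs Q (x + y)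
| ZN x : ZS hs Q x -> ZS hs Q (- x).

Definition fgq (P Q : M -> Prop) := exists hs, forall x, P x -> ZS hs Q x.

Lemma fgq_trans P R Q : fgq P R -> fgq R Q -> fgq P Q.
Proof.
case=> hs1 H1 [hs2 H2]; exists (hs1 ++ hs2) => x /H1; elim; try by constructor.
- move=> y /H2; elim; try by constructor.
  by move=> z zh; apply: Zh; rewrite mem_cat zh orbT.
- by move=> y yh; apply: Zh; rewrite mem_cat yh.
Qed.

Lemma fgq_sub (P1 P2 Q1 Q2 : M -> Prop) : (forall x, P1 x -> P2 x) ->
  (forall x, Q2 x -> Q1 x) -> fgq P2 Q2 -> fgq P1 Q1.
Proof.
move=> HP HQ [hs H]; exists hs => x /HP /H; elim; try by constructor.
by move=> y /HQ; apply: ZQ.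
Qed.


Definition Triv (P Q : M -> Prop) c := forall p, P p -> Q (act c p - p).

Lemma zclosedMz (V : zmodType) (S : V -> Prop) : S 0 ->
  (forall x y, S x -> S y -> S (x + y)) -> (forall x, S x -> S (- x)) ->
  forall x n, S x -> S (x *~ n).
Proof.
move=> S0 SD SN x n sx.
have H k : S (x *+ k) by elim: k => [|k IH]; rewrite ?mulr0n // mulrS; apply: SD.
case: n => n; first exact: H.
by rewrite NegzE mulrNz; apply: SN; apply: H.
Qed.

Lemma zclosed_sum (V : zmodType) (S : V -> Prop) (I : Type) (s : seq I) (F : I -> V) :
  S 0 -> (forall x y, S x -> S y -> S (x + y)) -> (forall i, S (F i)) ->
  S (\sum_(i <- s) F i).
Proof. move=> S0 SD SF; apply: big_rec => // i x _; exact: SD. Qed.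

Section TrivLemmas.
Variables (P Q : M -> Prop).
Hypotheses (HP : submod P) (HQ : submod Q).

Lemma Triv0 : Triv P Q 0.
Proof. by move=> p _; rewrite act0 subrr; case: HQ. Qed.

Lemma TrivD c1 c2 : Triv P Q c1 -> Triv P Q c2 -> Triv P Q (c1 + c2).
Proof.
move=> T1 T2 p Pp.
have -> : act (c1 + c2) p - p = (act c1 (act c2 p) - act c2 p) + (act c2 p - p).
  by rewrite actM addrA subrK.
case: (HQ) => _ QD _ _; apply: QD; last exact: T2.
by apply: T1; case: HP => _ _ _ PA; apply: PA.
Qed.

Lemma TrivN c : Triv P Q c -> Triv P Q (- c).
Proof.
move=> T1 p Pp.
have -> : act (- c) p - p = - (act c (act (- c) p) - act (- c) p).
  by rewrite -actM subrr act0 opprB.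
case: (HQ) => _ _ QN _; apply: QN; apply: T1.
by case: HP => _ _ _ PA; apply: PA.
Qed.

Lemma TrivMz c n : Triv P Q c -> Triv P Q (c *~ n).
Proof. apply: zclosedMz; [exact: Triv0 | exact: TrivD | exact: TrivN]. Qed.

End TrivLemmas.

Lemma base (cs : 'M[int]_r) Q G : \rank (toQ cs) = r -> submod Q ->
  (forall i p, Gen Q G p -> Q (act (row i cs) p - p)) -> fgq (Gen Q G) Q.
Proof.
move=> Hrk HQ Htr.
have HP := Gen_submod Q G.
set P := Gen Q G in HP Htr *.
set D := \det cs.
have HD : D != 0.
  have : toQ cs \in unitmx by rewrite -row_free_unit /row_free Hrk.
  by rewrite unitmxE unitfE det_map_mx intr_eq0.
have Tmul u : Triv P Q (u *m cs).
  rewrite mulmx_sum_row; apply: zclosed_sum.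
  - exact: Triv0.
  - exact: TrivD.
  - by move=> i; rewrite -[u 0 i]intz scaler_int; apply: TrivMz => //; apply: Htr.
pose red := fun a : 'rV[int]_r => \row_(j < r) ((a ord0 j) %% D)%Z.
have Tred a : Triv P Q (a - red a).
  have -> : a - red a = (\row_(j < r) ((a ord0 j) %/ D)%Z *m \adj cs) *m cs.
    rewrite -mulmxA mul_adj_mx mul_mx_scalar; apply/rowP => j.
    by rewrite !mxE {1}(divz_eq (a ord0 j) D) addrK mulrC.
  exact: Tmul.
pose N := `|D|%N.
have Hlt (a : 'rV[int]_r) (j : 'I_r) : (`|(a ord0 j %% D)%Z|%N < N)%N.
  by rewrite -ltz_nat !abszE ger0_norm ?modz_ge0 // ltz_mod.
pose reps := [seq \row_(j < r) ((f j : nat)%:Z) | f : {ffun 'I_r -> 'I_N} <- enum {ffun 'I_r -> 'I_N}].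
have Hrep a : red a \in reps.
  apply/mapP; exists [ffun j => Ordinal (Hlt a j)]; first by rewrite mem_enum.
  by apply/rowP => j; rewrite !mxE ffunE /= abszE ger0_norm // modz_ge0.
pose hs := [seq act v g | v <- reps, g <- G].
exists hs.
have key : forall p, P p -> forall b, ZS hs Q (act b p).
  move=> p; elim.
  - by move=> x Qx b; apply: ZQ; case: HQ => _ _ _; apply.
  - move=> g Gg b.
    have -> : act b g = act (red b) g + (act b g - act (red b) g).
      by rewrite addrC subrK.
    apply: ZD; first by apply: Zh; apply: allpairs_f.
    apply: ZQ.
    rewrite {1}(_ : b = red b + (b - red b)); last by rewrite addrC subrK.
    rewrite actM -actB; case: HQ => _ _ _; apply.
    by apply: Tred; apply: GG.
  - by move=> b; rewrite actx0; exact: Z0.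
  - by move=> x y _ IHx _ IHy b; rewrite actD; apply: ZD.
  - by move=> x _ IH b; rewrite actN; apply: ZN.
  - by move=> a x _ IH b; rewrite -actM; apply: IH.
by move=> p Pp; rewrite -(act0 p); apply: key.
Qed.

Lemma Gen_mono (Q1 Q2 : M -> Prop) G : (forall x, Q1 x -> Q2 x) ->
  forall x, Gen Q1 G x -> Gen Q2 G x.
Proof.
move=> H; apply: Gen_sub; first exact: Gen_submod.
- by move=> x /H; apply: GQ.
- by move=> x; apply: GG.
Qed.

Lemma prod_act_sub (P : M -> Prop) l x : submod P -> P x -> P (prod_act act l x).
Proof.
move=> HP Px; elim: l => [|a l IH] //=.
by apply: submodB => //; case: HP => _ _ _; apply.
Qed.

Hypothesis Hann : forall B : pred 'rV[int]_r,
      is_subgroup B -> subgroup_rank_lt B r ->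
      exists as_ : seq 'rV[int]_r,
        (0 < size as_)%N /\ all (fun a => a \notin B) as_ /\
        forall x : M, prod_act act as_ x = 0.

Lemma main d : forall s (cs : 'M[int]_(s, r)), (s + d)%N = r ->
  \rank (toQ cs) = s -> forall Q G, submod Q ->
  (forall i p, Gen Q G p -> Q (act (row i cs) p - p)) -> fgq (Gen Q G) Q.
Proof.
elim: d => [|d IH] s cs.
  rewrite addn0 => Hs; subst s => Hrk Q G; exact: base.
move=> Hs Hrk Q G HQ Htr.
pose B := fun a : 'rV[int]_r => (toQ a <= toQ cs)%MS.
have HB : is_subgroup B.
  split; first by rewrite unfold_in /B map_mx0 sub0mx.
  move=> a b; rewrite !unfold_in /B => Ha Hb.
  by rewrite map_mxB addmx_sub // -scaleN1r scalemx_sub.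
have HBr : subgroup_rank_lt B r.
  move=> n v Hv; apply: (leq_ltn_trans (mxrankS (_ : (toQ v <= toQ cs)%MS))).
    by apply/row_subP => i; rewrite -map_row; move: (Hv i); rewrite unfold_in.
  by rewrite Hrk -Hs addnS ltnS leq_addr.
case: (Hann HB HBr) => as_ [_ [Has Hz]].
have HP := Gen_submod Q G.
suff Hl : forall l, all (fun a => a \notin B) l ->
    fgq (Gen Q G) (Gen Q (map (prod_act act l) G)).
  apply: fgq_trans (Hl _ Has) _; exists [::] => x Hx; apply: ZQ.
  move: x Hx; apply: Gen_sub => //.
  by move=> x /mapP [g _ ->]; rewrite Hz; case: HQ.
elim=> [|a l IHl] /=.
  move=> _; exists [::] => x Hx; apply: ZQ; move: x Hx.
  apply: Gen_sub => //; first exact: Gen_submod.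
  - by move=> x; apply: GQ.
  - by move=> x xG; apply: GG; apply/mapP; exists x.
case/andP => Ha Hl.
pose G' := map (prod_act act l) G.
pose Q' := Gen Q (map (fun y => act a y - y) G').
have EQ' : Gen Q (map (prod_act act (a :: l)) G) = Q' by rewrite /Q' /G' -map_comp.
rewrite EQ'; apply: fgq_trans (IHl Hl) _.
have QQ' x : Q x -> Q' x by apply: GQ.
have HGP : forall x, Gen Q' G' x -> Gen Q G x.
  apply: Gen_sub => //.
  - apply: Gen_sub => //.
      by move=> x; apply: GQ.
    move=> x /mapP [y /mapP [g gG ->] ->].
    apply: submodB => //; last by apply: prod_act_sub => //; apply: GG.
    by case: (HP) => _ _ _; apply; apply: prod_act_sub => //; apply: GG.
  - by move=> x /mapP [g gG ->]; apply: prod_act_sub => //; apply: GG.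
apply: (fgq_sub (P2 := Gen Q' G') (Q2 := Q')) => //.
  by apply: Gen_mono.
have HQ' : submod Q' by apply: Gen_submod.
apply: (IH _ (col_mx a cs)) => //.
- by rewrite add1n addSn -addnS.
- rewrite map_col_mx -(addsmxE (toQ a) (toQ cs)).1.
  apply/eqP; rewrite eqn_leq; apply/andP; split.
    apply: leq_trans (mxrank_adds_leqif _ _).1 _.
    by apply: leq_add; [exact: rank_leq_row | rewrite Hrk].
  have L := mxrank_leqif_sup (addsmxSr (toQ a) (toQ cs)).
  rewrite Hrk in L; rewrite add1n (ltn_leqif L).
  by rewrite addsmx_sub negb_and; move: Ha; rewrite unfold_in /B => ->.
- move=> i p Hp; rewrite -(splitK i); case: (split i) => j /=.
    have -> : row (lshift s j) (col_mx a cs) = a.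
      by rewrite rowKu; apply/rowP => k; rewrite mxE (ord1 j).
    move: p Hp; apply: (Gen_sub (R := fun p => Q' (act a p - p))).
    + split.
      * by rewrite actx0 subrr; case: HQ'.
      * move=> x y Hx Hy; rewrite actD opprD addrACA.
        by case: HQ' => _ QD _ _; apply: QD.
      * move=> x Hx; rewrite actN -opprD.
        by case: HQ' => _ _ QN _; apply: QN.
      * move=> b x Hx; rewrite actC -actB.
        by case: HQ' => _ _ _; apply.
    + by move=> x Hx; apply: submodB => //; case: HQ' => _ _ _; apply.
    + by move=> x xG; apply: GG; apply/mapP; exists x.
  rewrite rowKd; apply: QQ'; apply: Htr; exact: HGP.
Qed.

End Main.

Unset Implicit Arguments.

Theorem theoremD (r : nat) (M : zmodType) (act : 'rV[int]_r -> M -> M) :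
  is_ZA_action act ->
  fg_ZA_module act ->
  (forall B : pred 'rV[int]_r,
      is_subgroup B -> subgroup_rank_lt B r ->
      exists as_ : seq 'rV[int]_r,
        (0 < size as_)%N /\ all (fun a => a \notin B) as_ /\
        forall x : M, prod_act act as_ x = 0) ->
  fg_abelian M.
Proof.
move=> Hact [gens Hgens] Hann.
have Q0 : submod act (fun x : M => x = 0).
  split=> //.
  - by move=> x y -> ->; rewrite addr0.
  - by move=> x ->; rewrite oppr0.
  - by move=> a x ->; rewrite actx0.
have [||hs Hhs] := @main r M act Hact Hann r 0 (0 : 'M[int]_(0, r)) erefl _
    (fun x => x = 0) gens Q0.
- by apply/eqP; rewrite -leqn0 rank_leq_row.
- by move=> [].
have conv : forall x, ZS hs (fun x => x = 0) x ->
    exists c : 'I_(size hs) -> int, x = \sum_(i < size hs) hs`_i *~ c i.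
  move=> x; elim.
  - move=> y ->; exists (fun _ => 0).
    by rewrite big1 // => i _.
  - move=> y yh; have yi : (index y hs < size hs)%N by rewrite index_mem.
    exists (fun i => if i == Ordinal yi then 1 else 0).
    rewrite (bigD1 (Ordinal yi)) //= eqxx mulr1z nth_index // big1 ?addr0 //.
    by move=> i /negbTE ->.
  - exists (fun _ => 0).
    by rewrite big1 // => i _.
  - move=> y z _ [c1 ->] _ [c2 ->]; exists (fun i => c1 i + c2 i).
    by rewrite -big_split; apply: eq_bigr => i _; rewrite mulrzDr.
  - move=> y _ [c ->]; exists (fun i => - c i).
    by rewrite -sumrN; apply: eq_bigr => i _; rewrite mulrNz.
exists (size hs), (fun i => hs`_i) => m.
apply: conv; apply: Hhs.
case: (Hgens m) => s [Hall ->].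
elim: s Hall => [|t s IH]; first by rewrite big_nil => _; apply: G0.
rewrite big_cons /= => /andP [ht hs'].
apply: GD; last exact: IH.
apply: submodMz; first exact: Gen_submod.
by apply: GA; apply: GG.
Qed.
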